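(* Let $\mathcal{A}$ be a quantum query algorithm with a $q$-bit classical witness deciding spectral Forrelation (as described in the context) that makes $t$ queries to $S$ and $t$ queries to $U$. Let $(S,U)$ be at least $\frac{59}{100}$-spectrally Forrelated, let $\Delta$ be a subset of the set of elements of $S$ such that $(\Delta,U)$ is at most $\frac{57}{100}$-spectrally Forrelated, and let $w$ be a witness such that $\mathcal{A}^{(S,U)}(w)$ accepts with probability at least $2/3$. Then $\mathsf{Sampler}^U(w,\Delta)$ makes $t$ queries to $U$, no queries to $S$, and outputs an element of $S\setminus\Delta$ with probability at least $\frac{1}{36t^2}$.
   Context: For sets $S,U\subseteq\{0,1\}^n$ (multisets are treated as their underlying sets), with $\Pi_S=\sum_{x\in S}|x\rangle\langle x|$, $(S,U)$ is $\alpha$-spectrally Forrelated for $\alpha=\|\Pi_UH^{\otimes n}\Pi_S\|_{\mathrm{op}}^2$. The algorithm $\mathcal{A}$ satisfies: if $(S,U)$ is at least $\frac{59}{100}$-spectrally Forrelated, some $w\in\{0,1\}^q$ makes $\mathcal{A}^{(S,U)}(w)$ accept with probability $\ge2/3$; if at most $\frac{57}{100}$-spectrally Forrelated, every $w$ is accepted with probability $\le1/3$. Oracles are phase oracles, e.g. $\mathcal{O}_S|b,x\rangle|z\rangle=(-1)^{b\cdot\delta(x\in S)}|b,x\rangle|z\rangle$. Write the state of $\mathcal{A}^{(S,U)}(w)$ before its final measurement of the first qubit as $V_t\mathcal{O}_SV_{t-1}\mathcal{O}_S\cdots\mathcal{O}_SV_0|w,0\rangle$, where the unitaries $V_j$ include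 the queries to $U$. $\mathsf{Sampler}^U(w,\Delta)$: sample $j\in\{0,\dots,t-1\}$ uniformly; prepare $V_j\mathcal{O}_\Delta V_{j-1}\mathcal{O}_\Delta\cdots\mathcal{O}_\Delta V_0|w,0\rangle$ where $\mathcal{O}_\Delta|b,x\rangle|z\rangle=(-1)^{b\cdot\delta(x\in\Delta)}|b,x\rangle|z\rangle$; measure in the standard basis obtaining $(b,x,z)$; if $x\in\Delta$ output the lexicographically first string not in $\Delta$, else output $x$. *)

(* Defs.v *)
From HB Require Import structures.
From mathcomp Require Import all_boot all_order all_algebra.
From mathcomp Require Import complex.
From mathcomp Require Import classical_sets reals.
Set Implicit Arguments. Unset Strict Implicit. Unset Printing Implicit Defensive.
Import Order.TTheory GRing.Theory Num.Theory.
Local Open Scope ring_scope.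

Section QueryModel.
Variable R : realType.
Local Notation C := R[i].

Definition sqn (z : C) : R := let: Complex a b := z in a ^+ 2 + b ^+ 2.
Definition cconj (z : C) : C := let: Complex a b := z in Complex a (- b).

Definition bits (n : nat) := n.-tuple bool.

Definition bdot n (x y : bits n) : bool :=
  odd (\sum_(i < n) (tnth x i && tnth y i)).

Definition hadamard n (y x : bits n) : C :=
  Complex ((-1) ^+ bdot y x * (Num.sqrt (2 ^+ n : R))^-1) 0.

Definition vnorm2 (T : finType) (v : T -> C) : R := \sum_(a : T) sqn (v a).

Definition matapp (T : finType) (M : T -> T -> C) (v : T -> C) : T -> C :=
  fun a => \sum_(b : T) M a b * v b.

Definition opnorm2 (T : finType) (M : T -> T -> C) : R :=
  sup [set r : R | exists v : T -> C, vnorm2 v != 0 /\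
                   r = vnorm2 (matapp M v) / vnorm2 v].

Definition projHproj n (S U : {set bits n}) (y x : bits n) : C :=
  if (y \in U) && (x \in S) then hadamard y x else 0.

(* (S,U) is alpha-spectrally Forrelated for alpha = forr S U *)
Definition forr n (S U : {set bits n}) : R := opnorm2 (projHproj S U).

(* ---------- registers |b, x>|z>, z = (witness register, ancillas) ---------- *)
Definition basis (n q k : nat) :=
  (bool * bits n * (bits q * bits k))%type.

Definition init n q k (w : bits q) : basis n q k :=
  (false, [tuple of nseq n false], (w, [tuple of nseq k false])).

Definition ket (T : finType) (a : T) : T -> C := fun c => if c == a then 1 else 0.

Definition phase_oracle n q k (D : {set bits n}) (psi : basis n q k -> C)
  : basis n q k -> C :=
  fun a => if a.1.1 && (a.1.2 \in D) then - psi a else psi a.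

(* gates of the unitaries V_j : fixed matrices, or a query to U *)
Inductive gate (n q k : nat) :=
  | GFix of (basis n q k -> basis n q k -> C)
  | GQU.

Definition isQU n q k (g : gate n q k) : bool := if g is GQU then true else false.

Definition unitary (T : finType) (M : T -> T -> C) : Prop :=
  forall a b : T, \sum_(c : T) cconj (M c a) * M c b = (a == b)%:R.

Definition gate_ok n q k (g : gate n q k) : Prop :=
  if g is GFix M then unitary M else True.

Definition apply_gate n q k (U : {set bits n}) (g : gate n q k)
  (psi : basis n q k -> C) : basis n q k -> C :=
  match g with GFix M => matapp M psi | GQU => phase_oracle U psi end.

Definition apply_V n q k (U : {set bits n}) (V : seq (gate n q k))
  (psi : basis n q k -> C) : basis n q k -> C :=
  foldl (fun phi g => apply_gate U g phi) psi V.

Fixpoint run n q k (V : nat -> seq (gate n q k)) (D U : {set bits n})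
  (w : bits q) (j : nat) : basis n q k -> C :=
  match j with
  | 0 => apply_V U (V 0%N) (ket (@init n q k w))
  | j'.+1 => apply_V U (V j) (phase_oracle D (run V D U w j'))
  end.

(* acceptance probability of A^{(S,U)}(w) (t queries to S):
   measure the first qubit b of V_t O_S ... O_S V_0 |w,0> and accept on 1 *)
Definition accept_prob n q k (t : nat) (V : nat -> seq (gate n q k))
  (S U : {set bits n}) (w : bits q) : R :=
  \sum_(a : basis n q k | a.1.1) sqn (run V S U w t a).

Fixpoint lexle (s t : seq bool) : bool :=
  match s, t with
  | [::], _ => true
  | _ :: _, [::] => false
  | a :: s', b :: t' => (~~ a && b) || ((a == b) && lexle s' t')
  end.

Definition lexfirst_notin n (D : {set bits n}) : bits n :=
  match [pick y : bits n | (y \notin D) &&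
           [forall z : bits n, (z \notin D) ==> lexle y z]] with
  | Some y => y
  | None => [tuple of nseq n false]
  end.

Definition sampler_out n (D : {set bits n}) (x : bits n) : bits n :=
  if x \in D then lexfirst_notin D else x.

(* probability that Sampler^U(w, D) outputs y:
   j uniform in {0..t-1}, measure V_j O_D ... O_D V_0 |w,0> in the standard basis *)
Definition sampler_prob n q k (t : nat) (V : nat -> seq (gate n q k))
  (U D : {set bits n}) (w : bits q) (y : bits n) : R :=
  (t%:R)^-1 * \sum_(j < t) \sum_(a : basis n q k | sampler_out D a.1.2 == y)
                             sqn (run V D U w j a).

(* number of queries to U made by Sampler when it samples j (it runs V_0..V_j) *)
Definition sampler_U_queries n q k (V : nat -> seq (gate n q k)) (j : nat) : nat :=
  (\sum_(i < j.+1) count (@isQU n q k) (V i))%N.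

End QueryModel.

(* Main.v *)
Require Import Defs.
From HB Require Import structures.
From mathcomp Require Import all_boot all_order all_algebra.
From mathcomp Require Import complex.
From mathcomp Require Import classical_sets reals.
From mathcomp Require Import ring lra.
From Stdlib Require List.
Set Implicit Arguments. Unset Strict Implicit. Unset Printing Implicit Defensive.
From Stdlib Require Import FunctionalExtensionality.
Import Order.TTheory GRing.Theory Num.Theory.
Local Notation re := complex.Re.
Local Notation im := complex.Im.
Local Open Scope ring_scope.

Lemma sqnE (R : realType) (z : R[i]) : sqn z = re z ^+ 2 + im z ^+ 2.
Proof. by case: z. Qed.

Lemma sqn_ge0 (R : realType) (z : R[i]) : 0 <= sqn z.
Proof. by rewrite sqnE addr_ge0 // sqr_ge0. Qed.

Lemma cconjE (R : realType) (z : R[i]) : cconj z = (z^*)%C.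
Proof. by case: z. Qed.

Lemma sqnC (R : realType) (z : R[i]) : (sqn z)%:C%C = (z^*)%C * z.
Proof. case: z => a b /=. apply/eqP; rewrite eq_complex /=. apply/andP; split; apply/eqP; ring. Qed.

Definition rd (R : realType) (z w : R[i]) : R := re z * re w + im z * im w.

Lemma sqnB (R : realType) (z w : R[i]) : sqn (z - w) = sqn z + sqn w - 2 * rd z w.
Proof. case: z w => a b [c d]; rewrite /rd /=; ring. Qed.

Lemma sqnD (R : realType) (z w : R[i]) : sqn (z + w) = sqn z + sqn w + 2 * rd z w.
Proof. case: z w => a b [c d]; rewrite /rd /=; ring. Qed.

Lemma sqnN (R : realType) (z : R[i]) : sqn (- z) = sqn z.
Proof. case: z => a b /=; ring. Qed.

Lemma unitary_norm (R : realType) (T : finType) (M : T -> T -> R[i]) (v : T -> R[i]) :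
  unitary M -> vnorm2 (matapp M v) = vnorm2 v.
Proof.
move=> HM; apply: (@complexI R); rewrite /vnorm2 !rmorph_sum /=.
under eq_bigr do rewrite sqnC.
under [RHS]eq_bigr do rewrite sqnC.
rewrite /matapp.
transitivity (\sum_c \sum_b \sum_b' ((v b)^*%C * v b') * ((M c b)^*%C * M c b')).
  apply: eq_bigr => c _; rewrite rmorph_sum /= mulr_suml; apply: eq_bigr => b _.
  rewrite mulr_sumr; apply: eq_bigr => b' _; rewrite rmorphM /=; ring.
rewrite exchange_big /=; apply: eq_bigr => b _; rewrite exchange_big /=.
rewrite (bigD1 b) //= [X in _ + X]big1 ?addr0.
  rewrite -mulr_sumr. have := HM b b; under eq_bigr do rewrite cconjE. rewrite eqxx => ->.
  by rewrite mulr1.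
move=> b' nb; rewrite -mulr_sumr. have := HM b b'; rewrite eq_sym (negbTE nb).
under eq_bigr do rewrite cconjE. by move=> ->; rewrite mulr0.
Qed.

Definition vsub (T : Type) (R : realType) (u v : T -> R[i]) : T -> R[i] := fun a => u a - v a.
Definition vadd (T : Type) (R : realType) (u v : T -> R[i]) : T -> R[i] := fun a => u a + v a.

Lemma matapp_sub (R : realType) (T : finType) (M : T -> T -> R[i]) u v :
  matapp M (vsub u v) = vsub (matapp M u) (matapp M v).
Proof.
apply: functional_extensionality => a; rewrite /matapp /vsub -sumrB.
by apply: eq_bigr => b _; rewrite mulrBr.
Qed.

Lemma matapp_add (R : realType) (T : finType) (M : T -> T -> R[i]) u v :
  matapp M (vadd u v) = vadd (matapp M u) (matapp M v).
Proof.
apply: functional_extensionality => a; rewrite /matapp /vadd -big_split.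
by apply: eq_bigr => b _; rewrite mulrDr.
Qed.

Lemma phase_sub (R : realType) n q k (D : {set bits n}) (u v : basis n q k -> R[i]) :
  phase_oracle D (vsub u v) = vsub (phase_oracle D u) (phase_oracle D v).
Proof.
apply: functional_extensionality => a; rewrite /phase_oracle /vsub.
by case: ifP => _ //; rewrite opprD.
Qed.

Lemma phase_add (R : realType) n q k (D : {set bits n}) (u v : basis n q k -> R[i]) :
  phase_oracle D (vadd u v) = vadd (phase_oracle D u) (phase_oracle D v).
Proof.
apply: functional_extensionality => a; rewrite /phase_oracle /vadd.
by case: ifP => _ //; rewrite opprD.
Qed.

Lemma phase_norm (R : realType) n q k (D : {set bits n}) (u : basis n q k -> R[i]) :
  vnorm2 (phase_oracle D u) = vnorm2 u.
Proof.
rewrite /vnorm2; apply: eq_bigr => a _; rewrite /phase_oracle.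
by case: ifP => _ //; rewrite sqnN.
Qed.

Lemma gate_sub (R : realType) n q k (U : {set bits n}) (g : gate R n q k) u v :
  apply_gate U g (vsub u v) = vsub (apply_gate U g u) (apply_gate U g v).
Proof. by case: g => [M|] /=; [apply: matapp_sub | apply: phase_sub]. Qed.

Lemma gate_add (R : realType) n q k (U : {set bits n}) (g : gate R n q k) u v :
  apply_gate U g (vadd u v) = vadd (apply_gate U g u) (apply_gate U g v).
Proof. by case: g => [M|] /=; [apply: matapp_add | apply: phase_add]. Qed.

Lemma gate_norm (R : realType) n q k (U : {set bits n}) (g : gate R n q k) u :
  gate_ok g -> vnorm2 (apply_gate U g u) = vnorm2 u.
Proof. by case: g => [M|] /= H; [apply: unitary_norm | apply: phase_norm]. Qed.

Lemma V_sub (R : realType) n q k (U : {set bits n}) (Vs : seq (gate R n q k)) u v :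
  apply_V U Vs (vsub u v) = vsub (apply_V U Vs u) (apply_V U Vs v).
Proof.
elim: Vs u v => [//|g Vs IH] u v; rewrite /apply_V /=.
by rewrite gate_sub; apply: IH.
Qed.

Lemma V_add (R : realType) n q k (U : {set bits n}) (Vs : seq (gate R n q k)) u v :
  apply_V U Vs (vadd u v) = vadd (apply_V U Vs u) (apply_V U Vs v).
Proof.
elim: Vs u v => [//|g Vs IH] u v; rewrite /apply_V /=.
by rewrite gate_add; apply: IH.
Qed.

Lemma V_norm (R : realType) n q k (U : {set bits n}) (Vs : seq (gate R n q k)) u :
  (forall g, List.In g Vs -> gate_ok g) -> vnorm2 (apply_V U Vs u) = vnorm2 u.
Proof.
elim: Vs u => [//|g Vs IH] u H; rewrite /apply_V /=.
rewrite (IH (apply_gate U g u)); last by move=> g' Hg'; apply: H; right.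
by apply: gate_norm; apply: H; left.
Qed.

Lemma ket_norm (R : realType) (T : finType) (a : T) : vnorm2 (@ket R T a) = 1.
Proof.
rewrite /vnorm2 (bigD1 a) //= big1 ?addr0 /ket ?eqxx.
  by rewrite /sqn /= expr1n expr0n addr0.
by move=> b /negbTE ->; rewrite /sqn /= expr0n addr0.
Qed.

Lemma run_norm (R : realType) n q k (V : nat -> seq (gate R n q k)) D U w j :
  (forall j g, List.In g (V j) -> gate_ok g) -> vnorm2 (run V D U w j) = 1.
Proof.
move=> H; elim: j => [|j IH] /=.
  by rewrite V_norm ?ket_norm //; apply: H.
by rewrite V_norm ?phase_norm //; apply: H.
Qed.
Lemma key (R : realFieldType) (x y x' y' : R) : 0 <= x -> 0 <= y -> 0 <= x' -> 0 <= y' ->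
  x^+2 + x'^+2 = 1 -> y^+2 + y'^+2 = 1 ->
  (x^+2 - y^+2)^+2 <= 2 - 2 * (x*y + x'*y').
Proof.
move=> hx hy hx' hy' h1 h2.
set c := x*y + x'*y'. set d := x*y' - x'*y. set e := x*y' + x'*y.
have hcd : c^+2 + d^+2 = 1.
  have -> : c^+2 + d^+2 = (x^+2 + x'^+2) * (y^+2 + y'^+2) by rewrite /c /d; ring.
  by rewrite h1 h2 mulr1.
have he0 : e^+2 + (x*y - x'*y')^+2 = 1.
  have -> : e^+2 + (x*y - x'*y')^+2 = (x^+2 + x'^+2) * (y^+2 + y'^+2) by rewrite /e; ring.
  by rewrite h1 h2 mulr1.
have he : e^+2 <= 1 by have := sqr_ge0 (x*y - x'*y'); lra.
have hxy : x^+2 - y^+2 = d * e.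
  have -> : d * e = x^+2 * y'^+2 - x'^+2 * y^+2 by rewrite /d /e; ring.
  have -> : y'^+2 = 1 - y^+2 by lra.
  have -> : x'^+2 = 1 - x^+2 by lra.
  ring.
rewrite hxy exprMn.
have hd := sqr_ge0 d.
have : d^+2 * e^+2 <= d^+2 by rewrite -{2}[d^+2]mulr1 ler_wpM2l.
have := sqr_ge0 (1 - c).
nra.
Qed.

Lemma cs (R : realType) (I : finType) (P : pred I) (u v : I -> R[i]) :
  (\sum_(i | P i) rd (u i) (v i)) ^+ 2 <=
  (\sum_(i | P i) sqn (u i)) * (\sum_(i | P i) sqn (v i)).
Proof.
set s := \sum_(i | P i) _; set X := \sum_(i | P i) _; set Y := \sum_(i | P i) _.
have X0 : 0 <= X by apply: sumr_ge0 => i _; apply: sqn_ge0.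
have Y0 : 0 <= Y by apply: sumr_ge0 => i _; apply: sqn_ge0.
have quad : forall l : R, 0 <= X - 2 * l * s + l ^+ 2 * Y.
  move=> l.
  have <- : \sum_(i | P i) (sqn (u i) - 2 * l * rd (u i) (v i) + l ^+ 2 * sqn (v i))
      = X - 2 * l * s + l ^+ 2 * Y by rewrite big_split sumrB -!mulr_sumr.
  apply: sumr_ge0 => i _; rewrite !sqnE /rd.
  set a := complex.Re (u i); set b := complex.Im (u i).
  set c := complex.Re (v i); set d := complex.Im (v i).
  have -> : a ^+ 2 + b ^+ 2 - 2 * l * (a * c + b * d) + l ^+ 2 * (c ^+ 2 + d ^+ 2)
     = (a - l * c) ^+ 2 + (b - l * d) ^+ 2 by ring.
  by rewrite addr_ge0 // sqr_ge0.
have [Yz | Ynz] := eqVneq Y 0.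
  have hv : forall i, P i -> sqn (v i) = 0.
    by apply/psumr_eq0P => //; move=> i _; apply: sqn_ge0.
  have -> : s = 0.
    rewrite /s big1 // => i Pi; have := hv i Pi; rewrite sqnE /rd => h.
    have hc : complex.Re (v i) = 0.
      by apply/eqP; rewrite -sqrf_eq0 eq_le sqr_ge0 andbT; have := sqr_ge0 (complex.Im (v i)); lra.
    have hd : complex.Im (v i) = 0.
      by apply/eqP; rewrite -sqrf_eq0 eq_le sqr_ge0 andbT; have := sqr_ge0 (complex.Re (v i)); lra.
    by rewrite hc hd !mulr0 addr0.
  by rewrite Yz expr0n /= mulr0.
have Ypos : 0 < Y by rewrite lt_def Ynz Y0.
have h := quad (s / Y).
have -> : X * Y = Y * (X - 2 * (s / Y) * s + (s / Y) ^+ 2 * Y) + s ^+ 2 by field.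
by rewrite lerDr mulr_ge0 // ltW.
Qed.

Lemma tri (R : realType) (T : finType) (a b : T -> R[i]) :
  Num.sqrt (vnorm2 (vadd a b)) <= Num.sqrt (vnorm2 a) + Num.sqrt (vnorm2 b).
Proof.
have Na : 0 <= vnorm2 a by apply: sumr_ge0 => i _; apply: sqn_ge0.
have Nb : 0 <= vnorm2 b by apply: sumr_ge0 => i _; apply: sqn_ge0.
have E : vnorm2 (vadd a b) = vnorm2 a + vnorm2 b + 2 * \sum_i rd (a i) (b i).
  by rewrite /vnorm2 /vadd mulr_sumr -!big_split; apply: eq_bigr => i _; rewrite sqnD.
have hs : \sum_i rd (a i) (b i) <= Num.sqrt (vnorm2 a) * Num.sqrt (vnorm2 b).
  rewrite -sqrtrM // (le_trans (ler_norm _)) // -sqrtr_sqr ler_sqrt ?mulr_ge0 //.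
  exact: cs.
have S0 := sqrtr_ge0 (vnorm2 a); have S1 := sqrtr_ge0 (vnorm2 b).
rewrite -(ger0_norm (addr_ge0 S0 S1)) -sqrtr_sqr ler_sqrt ?sqr_ge0 //.
rewrite E sqrrD !sqr_sqrtr //. lra.
Qed.

Lemma sum_sq (R : realType) (t : nat) (r : nat -> R) :
  (\sum_(j < t) r j) ^+ 2 <= t%:R * \sum_(j < t) r j ^+ 2.
Proof.
elim: t => [|t IH]; first by rewrite !big_ord0 expr0n mul0r.
rewrite !big_ord_recr /=.
set s := \sum_(j < t) r j; set Q := \sum_(j < t) r j ^+ 2; set x := r t.
have Q0 : 0 <= Q by apply: sumr_ge0 => i _; apply: sqr_ge0.
have [t0 | tpos] := eqVneq t 0%N.
  move: IH; rewrite /s /Q t0 !big_ord0 => _; rewrite mul1r add0r; lra.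
have tp : 0 < (t%:R : R) by rewrite ltr0n lt0n.
have hD : 0 <= Q + t%:R * x ^+ 2 - 2 * s * x.
  have : 0 <= t%:R * (Q + t%:R * x ^+ 2 - 2 * s * x).
    have h2 := sqr_ge0 (t%:R * x - s).
    have -> : t%:R * (Q + t%:R * x ^+ 2 - 2 * s * x) =
      (t%:R * Q - s ^+ 2) + (t%:R * x - s) ^+ 2 by ring.
    by rewrite addr_ge0 // subr_ge0.
  by rewrite pmulr_rge0.
rewrite -natr1.
have -> : (t%:R + 1) * (Q + x ^+ 2) = t%:R * Q + (Q + t%:R * x ^+ 2 - 2 * s * x) + 2 * s * x + x ^+ 2 by ring.
rewrite sqrrD -mulr_natl. move: IH; rewrite -/s -/Q => IH. lra.
Qed.

Lemma le_rd_sqrt (R : realType) (c A B : R) : 0 <= A -> 0 <= B -> c ^+ 2 <= A * B ->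
  c <= Num.sqrt A * Num.sqrt B.
Proof.
move=> hA hB h; rewrite -sqrtrM // (le_trans (ler_norm _)) // -sqrtr_sqr ler_sqrt ?mulr_ge0 //.
Qed.

Lemma accept_diff (R : realType) (T : finType) (P : pred T) (psi phi : T -> R[i]) :
  vnorm2 psi = 1 -> vnorm2 phi = 1 ->
  (\sum_(a | P a) sqn (psi a) - \sum_(a | P a) sqn (phi a)) ^+ 2 <= vnorm2 (vsub psi phi).
Proof.
move=> h1 h2.
set A := \sum_(a | P a) sqn (psi a); set B := \sum_(a | P a) sqn (phi a).
set A' := \sum_(a | ~~ P a) sqn (psi a); set B' := \sum_(a | ~~ P a) sqn (phi a).
set c1 := \sum_(a | P a) rd (psi a) (phi a); set c2 := \sum_(a | ~~ P a) rd (psi a) (phi a).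
have hA : A + A' = 1 by rewrite -h1 /vnorm2 (bigID P) /=.
have hB : B + B' = 1 by rewrite -h2 /vnorm2 (bigID P) /=.
have E : vnorm2 (vsub psi phi) = 2 - 2 * (c1 + c2).
  have -> : c1 + c2 = \sum_a rd (psi a) (phi a) by rewrite (bigID P) /=.
  rewrite /vnorm2 /vsub.
  under eq_bigr do rewrite sqnB.
  rewrite sumrB big_split /= -/(vnorm2 psi) -/(vnorm2 phi) h1 h2 mulr_sumr; ring.
have A0 : 0 <= A by apply: sumr_ge0 => i _; apply: sqn_ge0.
have B0 : 0 <= B by apply: sumr_ge0 => i _; apply: sqn_ge0.
have A'0 : 0 <= A' by apply: sumr_ge0 => i _; apply: sqn_ge0.
have B'0 : 0 <= B' by apply: sumr_ge0 => i _; apply: sqn_ge0.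
have hc1 : c1 <= Num.sqrt A * Num.sqrt B by apply: le_rd_sqrt => //; apply: cs.
have hc2 : c2 <= Num.sqrt A' * Num.sqrt B' by apply: le_rd_sqrt => //; apply: cs.
have := key (sqrtr_ge0 A) (sqrtr_ge0 B) (sqrtr_ge0 A') (sqrtr_ge0 B').
rewrite !sqr_sqrtr // => /(_ hA hB) hk.
rewrite E; lra.
Qed.

Lemma vnorm2_ge0 (R : realType) (T : finType) (v : T -> R[i]) : 0 <= vnorm2 v.
Proof. by apply: sumr_ge0 => i _; apply: sqn_ge0. Qed.

Lemma sqn0 (R : realType) : sqn (0 : R[i]) = 0.
Proof. by rewrite /sqn /= expr0n addr0. Qed.

Definition ediff (R : realType) n q k (V : nat -> seq (gate R n q k)) (S D U : {set bits n})
  (w : bits q) (j : nat) :=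
  vsub (phase_oracle S (run V D U w j)) (phase_oracle D (run V D U w j)).

Lemma hybrid (R : realType) n q k (V : nat -> seq (gate R n q k)) (S D U : {set bits n})
  (w : bits q) :
  (forall j g, List.In g (V j) -> gate_ok g) ->
  forall j, Num.sqrt (vnorm2 (vsub (run V S U w j) (run V D U w j)))
    <= \sum_(i < j) Num.sqrt (vnorm2 (ediff V S D U w i)).
Proof.
move=> HV; elim=> [|j IH].
  rewrite big_ord0 /= /vnorm2 big1 ?sqrtr0 // => a _.
  by rewrite /vsub subrr sqn0.
rewrite big_ord_recr /=.
have -> : vsub (apply_V U (V j.+1) (phase_oracle S (run V S U w j)))
               (apply_V U (V j.+1) (phase_oracle D (run V D U w j)))
  = vadd (apply_V U (V j.+1) (phase_oracle S (vsub (run V S U w j) (run V D U w j))))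
         (apply_V U (V j.+1) (ediff V S D U w j)).
  rewrite -V_sub -V_add; congr apply_V.
  rewrite phase_sub /ediff; apply: functional_extensionality => a.
  by rewrite /vadd /vsub addrA subrK.
apply: (le_trans (tri _ _)); apply: lerD => //.
by rewrite V_norm ?phase_norm //; apply: HV.
by rewrite V_norm //; apply: HV.
Qed.

Lemma edge_bound (R : realType) n q k (V : nat -> seq (gate R n q k)) (S D U : {set bits n})
  (w : bits q) j : D \subset S ->
  vnorm2 (ediff V S D U w j) <=
  4 * \sum_(a : basis n q k | a.1.2 \in S :\: D) sqn (run V D U w j a).
Proof.
move=> HD; rewrite /vnorm2 mulr_sumr [X in _ <= X]big_mkcond /=; apply: ler_sum => a _.
rewrite /ediff /vsub /phase_oracle finset.in_setD.
set z := run V D U w j a.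
have z0 := sqn_ge0 z.
case: a z z0 => [[b x] c] z z0 /=.
case: b => /=; case hD: (x \in D) => /=.
- by rewrite (fintype.subsetP HD _ hD) /= subrr sqn0.
- case: (x \in S) => /=; last by rewrite subrr sqn0.
  have -> : sqn (- z - z) = 4 * sqn z by case: (z) => u v /=; ring.
  by [].
- by rewrite subrr sqn0.
- by rewrite subrr sqn0; case: ifP => _ //; rewrite mulr_ge0.
Qed.

Lemma sampler_bound (R : realType) n q k t (V : nat -> seq (gate R n q k)) (U D : {set bits n})
  (w : bits q) (SD : {set bits n}) : [disjoint SD & D] ->
  (t%:R)^-1 * \sum_(j < t) \sum_(a : basis n q k | a.1.2 \in SD) sqn (run V D U w j a)
  <= \sum_(y in SD) sampler_prob t V U D w y.
Proof.
move=> Hdis; rewrite /sampler_prob -mulr_sumr ler_wpM2l ?invr_ge0 ?ler0n //.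
rewrite [X in _ <= X]exchange_big /=; apply: ler_sum => j _.
rewrite (partition_big (fun a : basis n q k => sampler_out D a.1.2) (mem SD)) /=; last first.
  move=> a Ha; rewrite /sampler_out.
  by have -> : (a.1.2 \in D) = false by apply: (disjointFr Hdis).
apply: ler_sum => y _.
rewrite [X in _ <= X]big_mkcond [X in X <= _]big_mkcond /=; apply: ler_sum => a _.
case: (a.1.2 \in SD); case: (sampler_out D a.1.2 == y) => //=; exact: sqn_ge0.
Qed.

Theorem mainTheorem6 (R : realType) (n q k t : nat)
  (V : nat -> seq (gate R n q k))
  (HVunit : forall (j : nat) (g : gate R n q k), Stdlib.Lists.List.In g (V j) -> gate_ok g)
  (HUq : (\sum_(j < t.+1) count (@isQU R n q k) (V j))%N = t)
  (Hyes : forall S U : {set bits n}, 59 / 100 <= forr R S U ->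
            exists w : bits q, 2 / 3 <= accept_prob t V S U w)
  (Hno : forall S U : {set bits n}, forr R S U <= 57 / 100 ->
            forall w : bits q, accept_prob t V S U w <= 1 / 3)
  (S U D : {set bits n}) (w : bits q)
  (HS : 59 / 100 <= forr R S U)
  (HD : D \subset S)
  (HDU : forr R D U <= 57 / 100)
  (Hw : 2 / 3 <= accept_prob t V S U w) :
  (forall j : nat, (j < t)%N -> (sampler_U_queries V j <= t)%N) /\
  1 / (36 * t%:R ^+ 2) <= \sum_(y in S :\: D) sampler_prob t V U D w y.
Proof.
split.
  move=> j hj; rewrite /sampler_U_queries -HUq.
  rewrite -!(big_mkord xpredT (fun i => count (@isQU R n q k) (V i))).
  by rewrite (@big_cat_nat _ _ _ j.+1 0 t.+1) ?leq_addr // ltnW.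
have hno := Hno D U HDU w.
have hacc : (accept_prob t V S U w - accept_prob t V D U w) ^+ 2
    <= vnorm2 (vsub (run V S U w t) (run V D U w t)).
  by apply: accept_diff; apply: run_norm.
set N := vnorm2 _ in hacc.
have N19 : 1 / 9 <= N by nra.
set r := fun i => Num.sqrt (vnorm2 (ediff V S D U w i)).
have hyb : Num.sqrt N <= \sum_(i < t) r i by apply: hybrid.
have N0 : 0 <= N by apply: vnorm2_ge0.
have hN : N <= (\sum_(i < t) r i) ^+ 2.
  rewrite -{1}(sqr_sqrtr N0); have := sqrtr_ge0 N; move: hyb; set s := Num.sqrt N; set m := \sum_(i < t) r i; nra.
have hsq := sum_sq t r.
set p := fun i => \sum_(a : basis n q k | a.1.2 \in S :\: D) sqn (run V D U w i a).
have hr : \sum_(i < t) r i ^+ 2 <= 4 * \sum_(i < t) p i.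
  rewrite mulr_sumr; apply: ler_sum => i _; rewrite /r sqr_sqrtr ?vnorm2_ge0 //.
  exact: edge_bound.
have hsamp : (t%:R)^-1 * \sum_(i < t) p i <= \sum_(y in S :\: D) sampler_prob t V U D w y.
  apply: sampler_bound; rewrite finset.disjoints_subset; apply/fintype.subsetP => x; rewrite finset.in_setD finset.in_setC.
  by case/andP.
apply: le_trans hsamp.
have t0 : (0 : R) <= t%:R by rewrite ler0n.
have [tz | tnz] := eqVneq t 0%N.
  move: hsq hr hN N19; rewrite tz !big_ord0 mul0r; lra.
have tp : (0 : R) < t%:R by rewrite ltr0n lt0n.
have hp : 1 / (36 * t%:R) <= \sum_(i < t) p i.
  rewrite ler_pdivrMr ?mulr_gt0 //; nra.
have -> : 1 / (36 * t%:R ^+ 2) = (t%:R)^-1 * (1 / (36 * t%:R)) :> R.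
  by field; rewrite pnatr_eq0.
by rewrite ler_wpM2l ?invr_ge0.
Qed.
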